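(* Let $D$ be a division ring with center $F$ such that $D$ is algebraic over $F$. Let $V$ be a maximal subring of $F$ which is not a field, and let $x\in F\setminus V$. Suppose that $T=\{\alpha\in D: \alpha \text{ is integral over } V\}$ is a subring of $D$. Then $D$ has a maximal subring $W$ such that $T\subseteq W$, $x\notin W$ (in particular $x\notin T$), and $F\cap W=V$.
   Context: All rings are associative unital and subrings share the identity. A maximal subring of a ring $T$ is a proper subring maximal under inclusion among proper subrings of $T$. An element $\alpha\in D$ is integral over $V\subseteq F$ if it satisfies a monic polynomial with coefficients in $V$. *)

(* Defs.v *)
From mathcomp Require Import all_boot all_algebra.
Set Implicit Arguments. Unset Strict Implicit. Unset Printing Implicit Defensive.
Import GRing.Theory.
Local Open Scope ring_scope.

Definition psubset {R : Type} (A B : R -> Prop) : Prop := forall a, A a -> B a.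

Definition is_subring {R : nzRingType} (S : R -> Prop) : Prop :=
  [/\ S 1, (forall a b, S a -> S b -> S (a - b)) & (forall a b, S a -> S b -> S (a * b))].

Definition maximal_subring_of {R : nzRingType} (A S : R -> Prop) : Prop :=
  [/\ is_subring S, psubset S A, (exists a, A a /\ ~ S a) &
      (forall S' : R -> Prop, is_subring S' -> psubset S' A ->
         (exists a, A a /\ ~ S' a) -> psubset S S' -> psubset S' S)].

Definition is_division_ring (D : unitRingType) : Prop :=
  forall a : D, a != 0 -> a \is a GRing.unit.

Definition center {R : nzRingType} (a : R) : Prop := forall b : R, a * b = b * a.

Definition algebraic_over_center (D : nzRingType) : Prop :=
  forall a : D, exists p : {poly D}, [/\ p != 0, (forall i, center p`_i) & root p a].

Definition integral_over {D : nzRingType} (V : D -> Prop) (a : D) : Prop :=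
  exists p : {poly D}, [/\ p \is monic, (forall i, V p`_i) & root p a].

Definition is_field_subring {D : unitRingType} (S : D -> Prop) : Prop :=
  forall a, S a -> a != 0 -> S a^-1.

(* Main.v *)
Require Import Defs.
From mathcomp Require Import all_boot all_algebra.
From Stdlib Require Import Classical.
From mathcomp Require classical_sets.
Import GRing.Theory.
Local Open Scope ring_scope.
Set Implicit Arguments. Unset Strict Implicit.

Section Helpers.
Variable D : unitRingType.
Implicit Types (S : D -> Prop) (a b : D).

Lemma sr1 S : is_subring S -> S 1. Proof. by case. Qed.
Lemma srB S a b : is_subring S -> S a -> S b -> S (a - b).
Proof. by case=> _ H _; apply: H. Qed.
Lemma srM S a b : is_subring S -> S a -> S b -> S (a * b).
Proof. by case=> _ _ H; apply: H. Qed.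
Lemma sr0 S : is_subring S -> S 0.
Proof. by move=> h; rewrite -(subrr 1); apply: srB => //; apply: sr1. Qed.
Lemma srN S a : is_subring S -> S a -> S (- a).
Proof. by move=> h ha; rewrite -sub0r; apply: srB => //; apply: sr0. Qed.
Lemma srD S a b : is_subring S -> S a -> S b -> S (a + b).
Proof. by move=> h ha hb; rewrite -(opprK b); apply: srB => //; apply: srN. Qed.
Lemma srX S a n : is_subring S -> S a -> S (a ^+ n).
Proof.
move=> h ha; elim: n => [|n IH]; first by rewrite expr0; apply: sr1.
by rewrite exprS; apply: srM.
Qed.
Lemma srsum S n (F : 'I_n -> D) : is_subring S -> (forall i, S (F i)) ->
  S (\sum_(i < n) F i).
Proof.
move=> h hF; elim: n F hF => [|n IH] F hF; first by rewrite big_ord0; apply: sr0.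
by rewrite big_ord_recr /=; apply: srD => //; apply: IH.
Qed.
Lemma srI S S' : is_subring S -> is_subring S' -> is_subring (fun a => S a /\ S' a).
Proof.
move=> h h'; split; first by split; apply: sr1.
- by move=> a b [? ?] [? ?]; split; apply: srB.
- by move=> a b [? ?] [? ?]; split; apply: srM.
Qed.

Lemma center_sr : is_subring (@center D).
Proof.
split; first by move=> b; rewrite mul1r mulr1.
- by move=> a b ha hb c; rewrite mulrBl mulrBr ha hb.
- by move=> a b ha hb c; rewrite -mulrA hb mulrA ha mulrA.
Qed.
Lemma centerV a : center a -> center a^-1.
Proof. move=> ha b; have := commrV (esym (ha b)); by move=> ->. Qed.


Section WithV.
Variable V : D -> Prop.
Hypothesis divD : is_division_ring D.
Hypothesis maxV : maximal_subring_of center V.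

Lemma Vsr : is_subring V. Proof. by case: maxV. Qed.
Lemma Vc : psubset V center. Proof. by case: maxV. Qed.

Lemma genF S : is_subring S -> psubset S center -> psubset V S ->
  (exists a, S a /\ ~ V a) -> forall a, center a -> S a.
Proof.
move=> hS hSc hVS [y [Sy nVy]] a ca; apply: NNPP => nSa.
case: maxV => _ _ _ /(_ S hS hSc (ex_intro _ a (conj ca nSa)) hVS) h.
by apply: nVy; apply: h.
Qed.

Lemma V_int a : V a -> integral_over V a.
Proof.
move=> Va; exists ('X - a%:P); split.
- exact: monicXsubC.
- move=> i; rewrite coefB coefX coefC.
  case: (i == 1)%N; case: (i == 0)%N; rewrite /= ?subr0 ?sub0r ?subrr.
  + by apply: srB Vsr _ _; [apply: sr1 Vsr|].
  + exact: sr1 Vsr.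
  + exact: srN Vsr Va.
  + exact: sr0 Vsr.
- by rewrite rootE hornerXsubC subrr.
Qed.

Lemma int_inv w : V w -> w \is a GRing.unit -> integral_over V w^-1 -> V w^-1.
Proof.
move=> Vw uw [p [mp Vp rp]].
have cw := Vc Vw.
set y := w^-1 in rp *.
have yw : y * w = 1 by rewrite /y mulVr.
have cyw : GRing.comm y w by rewrite /GRing.comm (cw y).
have sp : (0 < size p)%N by rewrite size_poly_gt0 monic_neq0.
move: rp; rewrite rootE horner_coef -(prednK sp) big_ord_recr /=.
have -> : p`_(size p).-1 = 1 by rewrite -lead_coefE; apply/monicP.
case: (size p).-1 => [|m].
  by rewrite big_ord0 add0r mul1r expr0 oner_eq0.
move/eqP=> E; have := congr1 (fun t => t * w ^+ m) E.
rewrite mul0r mulrDl mulr_suml mul1r.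
have -> : y ^+ m.+1 * w ^+ m = y by rewrite exprS -mulrA -exprMn_comm // yw expr1n mulr1.
move/eqP; rewrite addrC addr_eq0 => /eqP ->.
apply: srN Vsr _; apply: srsum Vsr _ => i.
have hi : (i <= m)%N by rewrite -ltnS ltn_ord.
have -> : w ^+ m = w ^+ i * w ^+ (m - i) by rewrite -exprD subnKC.
rewrite mulrA -(mulrA _ (y ^+ i)) -exprMn_comm // yw expr1n mulr1.
by apply: srM Vsr _ _; [apply: Vp | apply: srX Vsr Vw].
Qed.


Lemma exists_v : ~ is_field_subring V -> exists v, [/\ V v, v != 0 & ~ V v^-1].
Proof.
move=> nf; apply: NNPP => nex; apply: nf => a Va a0; apply: NNPP => nVa.
by apply: nex; exists a.
Qed.

Section WithVv.
Variable v : D.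
Hypotheses (Vv : V v) (v0 : v != 0) (nVv : ~ V v^-1).

Lemma vunit : v \is a GRing.unit. Proof. exact: divD. Qed.

Lemma denom f : center f -> exists N, V (v ^+ N * f).
Proof. move=> cf.
have cv := Vc Vv.
have cvX N : center (v ^+ N) by apply: srX center_sr _.
pose S a := center a /\ exists N, V (v ^+ N * a).
have hS : is_subring S.
  split.
  - by split; [apply: sr1 center_sr | exists 0%N; rewrite expr0 mulr1; apply: sr1 Vsr].
  - move=> a b [ca [N Na]] [cb [M Mb]]; split; first by apply: srB center_sr _ _.
    exists (N + M)%N; rewrite mulrBr.
    have -> : v ^+ (N + M) * a = v ^+ M * (v ^+ N * a) by rewrite mulrA -exprD addnC.
    have -> : v ^+ (N + M) * b = v ^+ N * (v ^+ M * b) by rewrite mulrA -exprD.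
    by apply: srB Vsr _ _; apply: srM Vsr (srX _ Vsr Vv) _.
  - move=> a b [ca [N Na]] [cb [M Mb]]; split; first by apply: srM center_sr _ _.
    exists (N + M)%N.
    have -> : v ^+ (N + M) * (a * b) = (v ^+ N * a) * (v ^+ M * b).
      by rewrite exprD -!mulrA; congr (_ * _); rewrite !mulrA ca.
    by apply: srM Vsr _ _.
suff : S f by case.
apply: (genF hS (fun a h => h.1)) => //.
- by move=> a Va; split; [apply: Vc | exists 0%N; rewrite expr0 mul1r].
- exists v^-1; split => //; split; first exact: centerV.
  by exists 1%N; rewrite expr1 mulrV ?vunit //; apply: sr1 Vsr.
Qed.

Lemma denoms (f : nat -> D) n : (forall i, center (f i)) ->
  exists M, forall i, (i < n)%N -> V (v ^+ M * f i).
Proof.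
move=> cf; elim: n => [|n [M HM]]; first by exists 0%N.
have [N HN] := denom (cf n).
exists (N + M)%N => i; rewrite ltnS leq_eqVlt => /orP [/eqP -> | lt].
  by rewrite addnC exprD -mulrA; apply: srM Vsr (srX _ Vsr Vv) HN.
by rewrite exprD -mulrA; apply: srM Vsr (srX _ Vsr Vv) (HM _ lt).
Qed.


Lemma scale (al : D) : algebraic_over_center D ->
  exists M, integral_over V (al * v ^+ M).
Proof.
move=> alg; have [p [p0 cp rp]] := alg al.
have sp : (0 < size p)%N by rewrite size_poly_gt0.
set n := (size p).-1.
have spn : size p = n.+1 by rewrite /n prednK.
set lc := p`_n.
have lc0 : lc != 0 by rewrite /lc /n -lead_coefE lead_coef_eq0.
set li := lc^-1.
have cli : center li by apply: centerV; apply: cp.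
have [M HM] := denoms (f := fun i => li * p`_i) n (fun i => srM center_sr cli (cp i)).
exists M; set c := v ^+ M.
have cc : center c by apply: srX center_sr (Vc Vv).
have Vc' : V c by apply: srX Vsr Vv.
pose g i := li * p`_i * c ^+ (n - i).
have gn : g n = 1 by rewrite /g subnn expr0 mulr1 /li mulVr //; apply: divD.
exists (\poly_(i < n.+1) g i); split.
- apply/monicP; rewrite lead_coef_poly //= gn ?oner_neq0 //.
- move=> i; rewrite coef_poly; case: (ltngtP i n) => hi.
  + rewrite ltnS ltnW // /g -(subnSK hi) exprSr.
    have -> : li * p`_i * (c ^+ (n - i.+1) * c) = c ^+ (n - i.+1) * (c * (li * p`_i)).
      move: (srM center_sr cli (cp i)) => h; by rewrite (h (c ^+ (n - i.+1) * c)) !mulrA.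
    by apply: srM Vsr (srX _ Vsr Vc') (HM _ hi).
  + by rewrite ltnS leqNgt hi /=; apply: sr0 Vsr.
  + by rewrite hi ltnSn gn; apply: sr1 Vsr.
- rewrite rootE horner_coef size_poly_eq ?gn ?oner_eq0 //.
  move: rp; rewrite rootE horner_coef spn => /eqP rp.
  have -> : \sum_(i < n.+1) (\poly_(i0 < n.+1) g i0)`_i * (al * c) ^+ i =
            (li * c ^+ n) * \sum_(i < n.+1) p`_i * al ^+ i.
    rewrite mulr_sumr; apply: eq_bigr => i _.
    have hi : (i <= n)%N by rewrite -ltnS.
    rewrite coef_poly ltn_ord /g exprMn_comm; last by rewrite /GRing.comm cc.
    have -> : al ^+ i * c ^+ i = c ^+ i * al ^+ i by rewrite (srX _ center_sr cc).
    rewrite !mulrA -(mulrA _ (c ^+ (n - i))) -exprD subnK //.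
    rewrite -!mulrA; congr (_ * _); rewrite !mulrA; congr (_ * _).
    by rewrite (srX _ center_sr cc).
  by rewrite rp mulr0.
Qed.

End WithVv.
End WithV.
End Helpers.

Unset Implicit Arguments. Set Strict Implicit.

Theorem proposition3p1 (D : unitRingType) (V : D -> Prop) (x : D) :
  is_division_ring D ->
  algebraic_over_center D ->
  maximal_subring_of center V ->
  ~ is_field_subring V ->
  center x -> ~ V x ->
  is_subring (integral_over V) ->
  exists W : D -> Prop,
    [/\ maximal_subring_of (fun _ => True) W,
        psubset (integral_over V) W,
        ~ W x &
        (forall a, (center a /\ W a) <-> V a)].
Proof.
move=> divD alg maxV nf cx nVx Tsr.
set T := integral_over V in Tsr *.
have [v [Vv v0 nVv]] := exists_v nf.
have VT : psubset V T := fun a => @V_int _ _ maxV a.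
have hVsr := Vsr maxV.
have hVc := Vc maxV.
have nTx : ~ T x.
  move=> Tx; apply: nVv; apply: (int_inv maxV Vv (vunit divD v0)).
  have := @genF _ _ maxV (fun a => center a /\ T a) (srI (@center_sr D) Tsr)
    (fun a h => h.1) (fun a h => conj (hVc a h) (VT a h)) _ v^-1.
  move=> h; have [] := h (ex_intro _ x (conj (conj cx Tx) nVx)) (centerV (hVc v Vv)) => //.
have key : forall S, is_subring S -> psubset T S -> S x -> forall a, S a.
  move=> S hS TS Sx a.
  have FS : forall b, center b -> S b.
    move=> b cb.
    have := @genF _ _ maxV (fun a => center a /\ S a) (srI (@center_sr D) hS)
      (fun a h => h.1) (fun a h => conj (hVc a h) (TS a (VT a h))) _ b cb.
    by case; [exists x | ].
  have [M HM] := scale divD maxV Vv v0 nVv a alg.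
  have uM := unitrX M (vunit divD v0).
  rewrite -(mulrK uM a); apply: srM hS (TS _ HM) (FS _ _).
  apply: centerV; exact: (srX M (@center_sr D) (hVc v Vv)).
pose P := fun S : D -> Prop => [/\ ~ S x,
   (forall a b, S a -> S b -> S (a - b) /\ S (a * b)) &
   ((exists a, S a) -> psubset T S)].
have [A [PA maxA]] : exists A, P A /\ forall B, classical_sets.proper A B -> ~ P B.
  apply: classical_sets.Zorn_bigcup => F FP tot.
  rewrite /classical_sets.bigcup /classical_sets.mkset /=.
  split.
  - by case=> X FX Xx; case: (FP X FX) => h _ _; apply: h.
  - move=> a b [X FX Xa] [Y FY Yb].
    case: (tot X Y FX FY) => sub.
    + have [_ cl _] := FP Y FY; have [h1 h2] := cl a b (sub a Xa) Yb.
      by split; exists Y.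
    + have [_ cl _] := FP X FX; have [h1 h2] := cl a b Xa (sub b Yb).
      by split; exists X.
  - move=> [a [X FX Xa]] t Tt; have [_ _ h] := FP X FX; exists X => //.
    by apply: h => //; exists a.
case: PA => nAx Acl ATh.
have PT : P T.
  split => //; last by move=> _ a.
  by move=> a b Ta Tb; split; [apply: srB | apply: srM].
have neA : exists a, A a.
  apply: NNPP => ne; apply: (maxA T) => //; split.
  - by move=> a Aa; exfalso; apply: ne; exists a.
  - by move=> sub; apply: ne; exists 1; apply: sub; apply: sr1 Tsr.
have TA := ATh neA.
have Asr : is_subring A.
  split; first by apply: TA; apply: sr1 Tsr.
  - by move=> a b Aa Ab; case: (Acl a b Aa Ab).
  - by move=> a b Aa Ab; case: (Acl a b Aa Ab).
exists A; split => //.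
- split => //; first by exists x.
  move=> S hS _ [a [_ nSa]] AS; apply: NNPP => nSA.
  apply: (maxA S); first by split.
  split.
  - move=> Sx; apply: nSa; exact: (key S hS (fun t h => AS _ (TA _ h)) Sx).
  - by move=> a' b' Sa Sb; split; [apply: srB | apply: srM].
  - by move=> _ t Tt; apply: AS; apply: TA.
- move=> a; split.
  + case=> ca Aa.
    case: maxV => _ _ _ h.
    apply: (h (fun b => center b /\ A b)) => //.
    * exact: (srI (@center_sr D) Asr).
    * by move=> b hb; case: hb.
    * by exists x; split => // [[]].
    * by move=> b Vb; split; [apply: hVc | apply: TA; apply: VT].
  + by move=> Va; split; [apply: hVc | apply: TA; apply: VT].
Qed.
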